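(* Let $\Gamma$ be a connected, undirected graph without loops on $n$ nodes with Laplacian $\mathbf L=\mathbf K-\mathbf A$, and let $\phi_1,\dots,\phi_n$ be an orthonormal basis of eigenvectors of $\mathbf L$ with $\mathbf L\phi_i=\mu_i\phi_i$. Let $$\mathbf G=\begin{bmatrix}\mathbf 0&\mathbf I\\-\mathbf I&-\mathbf L\end{bmatrix},\qquad \mathbf U=\mathbf G(\mathbf G^T\mathbf G)^{-1/2},$$ and set $\lambda_i^{P+}=\tfrac12\big[\sqrt{\mu_i^2+4}+\mu_i\big]$. Then $$\mathbf U=\begin{bmatrix}\mathcal A&\mathcal B\\-\mathcal B&\mathcal A\end{bmatrix},\qquad \mathcal A=\sum_{i=1}^n\frac{1-(\lambda_i^{P+})^2}{1+(\lambda_i^{P+})^2}\phi_i\phi_i^T,\quad \mathcal B=\sum_{i=1}^n\frac{2\lambda_i^{P+}}{1+(\lambda_i^{P+})^2}\phi_i\phi_i^T.$$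
   Context: $\mathbf A$ is the adjacency matrix, $\mathbf K$ the diagonal degree matrix, $\mathbf I,\mathbf 0$ the $n\times n$ identity and zero matrices; $(\mathbf G^T\mathbf G)^{-1/2}$ is the inverse of the positive definite square root of $\mathbf G^T\mathbf G$, so $\mathbf U$ is the orthogonal factor in the polar decomposition of $\mathbf G$. *)

(* Defs.v *)
From HB Require Import structures.
From mathcomp Require Import all_boot all_order all_algebra.
Set Implicit Arguments. Unset Strict Implicit. Unset Printing Implicit Defensive.
Import Order.TTheory GRing.Theory Num.Theory.
Local Open Scope ring_scope.

Definition simple_graph (n : nat) (e : rel 'I_n) : Prop :=
  symmetric e /\ irreflexive e.

Definition graph_connected (n : nat) (e : rel 'I_n) : Prop :=
  forall i j : 'I_n, connect e i j.

Definition adjmx (R : nzRingType) (n : nat) (e : rel 'I_n) : 'M[R]_n :=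
  \matrix_(i, j) (e i j)%:R.

Definition degmx (R : nzRingType) (n : nat) (e : rel 'I_n) : 'M[R]_n :=
  diag_mx (\row_i (\sum_j adjmx R e i j)).

Definition laplacian (R : nzRingType) (n : nat) (e : rel 'I_n) : 'M[R]_n :=
  degmx R e - adjmx R e.

Definition pos_def (R : numDomainType) (m : nat) (S : 'M[R]_m) : Prop :=
  S^T = S /\ forall v : 'cV[R]_m, v != 0 -> 0 < (v^T *m S *m v) 0 0.

Definition is_pd_sqrt (R : numDomainType) (m : nat) (M S : 'M[R]_m) : Prop :=
  pos_def S /\ S *m S = M.

Definition Gmx (R : nzRingType) (n : nat) (L : 'M[R]_n) : 'M[R]_(n + n) :=
  block_mx 0 1%:M (- 1%:M) (- L).

Definition lamPplus (R : rcfType) (mu : R) : R :=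
  (Num.sqrt (mu ^+ 2 + 4) + mu) / 2.

(* Main.v *)
From HB Require Import structures.
Require Import Defs.
From mathcomp Require Import all_boot all_order all_algebra.
From mathcomp Require Import ring lra.
Import Order.TTheory GRing.Theory Num.Theory.
Local Open Scope ring_scope.
Set Implicit Arguments. Unset Strict Implicit.

Section F.
Variable (R : rcfType) (n : nat) (Phi : 'M[R]_n).
Hypothesis orth : Phi^T *m Phi = 1%:M.

Definition Dm (d : 'I_n -> R) : 'M[R]_n := diag_mx (\row_i d i).
Definition F (d : 'I_n -> R) := Phi *m Dm d *m Phi^T.

Lemma orth2 : Phi *m Phi^T = 1%:M.
Proof. exact: mulmx1C. Qed.

Lemma F_ext d1 d2 : (forall i, d1 i = d2 i) -> F d1 = F d2.
Proof. by move=> h; rewrite /F /Dm; congr (_ *m _ *m _); apply/matrixP=> i j; rewrite !mxE h. Qed.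

Lemma DmM d1 d2 : Dm d1 *m Dm d2 = Dm (fun i => d1 i * d2 i).
Proof.
apply/matrixP=> i j; rewrite /Dm mul_diag_mx !mxE; case: eqP => _; by rewrite ?mulr0 ?mulr1n ?mulr0n.
Qed.

Lemma FM d1 d2 : F d1 *m F d2 = F (fun i => d1 i * d2 i).
Proof.
by rewrite /F !mulmxA -[Phi *m Dm d1 *m Phi^T *m Phi]mulmxA orth mulmx1 -(mulmxA Phi) DmM.
Qed.

Lemma FD d1 d2 : F d1 + F d2 = F (fun i => d1 i + d2 i).
Proof.
rewrite /F -mulmxDl -mulmxDr; congr (_ *m _ *m _).
by apply/matrixP=> i j; rewrite !mxE; case: eqP => _; rewrite ?mulr0n ?mulr1n ?addr0.
Qed.

Lemma FN d : - F d = F (fun i => - d i).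
Proof.
rewrite /F -mulNmx -mulmxN; congr (_ *m _ *m _).
by apply/matrixP=> i j; rewrite !mxE; case: eqP => _; rewrite ?mulr0n ?mulr1n ?oppr0.
Qed.

Lemma F1 : F (fun _ => 1) = 1%:M.
Proof.
rewrite /F /Dm -orth2; congr (_ *m _).
rewrite -[RHS]mulmx1; congr (_ *m _).
by apply/matrixP=> i j; rewrite !mxE.
Qed.

Lemma FT d : (F d)^T = F d.
Proof. by rewrite /F !trmx_mul trmxK tr_diag_mx mulmxA. Qed.

Lemma F_outer (c : 'I_n -> R) :
  \sum_(i < n) c i *: (col i Phi *m (col i Phi)^T) = F c.
Proof.
apply/matrixP=> i j; rewrite summxE /F mul_mx_diag !mxE.
apply: eq_bigr => k _; rewrite !mxE big_ord1 !mxE; ring.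
Qed.

Lemma F_quad d (x y : 'cV[R]_n) :
  (x^T *m F d *m y) 0 0 = \sum_i (Phi^T *m x) i 0 * d i * (Phi^T *m y) i 0.
Proof.
rewrite /F !mulmxA -(mulmxA _ _ y) -[x^T *m Phi]trmxK trmx_mul trmxK.
rewrite !mxE; apply: eq_bigr => k _; rewrite mul_mx_diag !mxE; ring.
Qed.

Lemma F0 : F (fun _ => 0) = 0.
Proof.
rewrite /F /Dm; have -> : diag_mx (\row_(i < n) (0:R)) = 0.
  by apply/matrixP=> i j; rewrite !mxE; case: eqP => _; rewrite ?mulr0n ?mulr1n.
by rewrite mulmx0 mul0mx.
Qed.

End F.
Lemma tr_quad (R : rcfType) m (M X : 'M[R]_m) :
  \tr (X^T *m M *m X) = \sum_j ((col j X)^T *m M *m col j X) 0 0.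
Proof.
rewrite /mxtrace; apply: eq_bigr => j _; rewrite tr_col !mxE.
apply: eq_bigr => k _; rewrite !mxE; congr (_ * _); apply: eq_bigr => l _; rewrite !mxE //.
Qed.

Lemma sqrt_uniq (R : rcfType) m (S P : 'M[R]_m) : S^T = S -> P^T = P ->
  (forall v : 'cV[R]_m, v != 0 -> 0 < (v^T *m S *m v) 0 0) ->
  (forall v : 'cV[R]_m, 0 <= (v^T *m P *m v) 0 0) -> S *m S = P *m P -> S = P.
Proof.
move=> ST PT Spd Ppsd SP.
have S0 : forall v : 'cV[R]_m, 0 <= (v^T *m S *m v) 0 0.
  move=> v; have [->|/Spd/ltW //] := eqVneq v 0.
  by rewrite mulmx0 mxE.
set X := S - P.
have XT : X^T = X by rewrite /X linearB /= ST PT.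
have E : S *m X + X *m P = 0.
  by rewrite /X mulmxBr mulmxBl SP addrA subrK subrr.
have E2 : \tr (X^T *m S *m X) + \tr (X^T *m P *m X) = 0.
  rewrite XT -(mulmxA X S X) (mxtrace_mulC (X *m P) X) -mxtraceD.
  by rewrite -mulmxDr E mulmx0 mxtrace0.
have T1 : 0 <= \tr (X^T *m S *m X) by rewrite tr_quad; apply: sumr_ge0 => j _.
have T2 : 0 <= \tr (X^T *m P *m X) by rewrite tr_quad; apply: sumr_ge0 => j _.
have T3 : \tr (X^T *m S *m X) = 0 by lra.
move: T3; rewrite tr_quad => /eqP; rewrite psumr_eq0 => [/allP H|j _ //].
suff : X = 0 by move/eqP; rewrite subr_eq0 => /eqP.
apply/matrixP => i j.
have := H j (mem_index_enum _); rewrite implyTb => /eqP Hj.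
have : col j X = 0.
  apply/eqP; apply: contraT => /Spd; by rewrite Hj ltxx.
by move/matrixP/(_ i 0); rewrite !mxE.
Qed.
Lemma scal (R : rcfType) (mu : R) :
  let l := lamPplus mu in
  let a := (1 - l ^+ 2) / (1 + l ^+ 2) in
  let b := (2 * l) / (1 + l ^+ 2) in
  [/\ a ^+ 2 + b ^+ 2 = 1, a + b * mu = - a, 0 < b & b * (b - a * mu) - a ^+ 2 = 1].
Proof.
move=> l a b.
set s := Num.sqrt (mu ^+ 2 + 4).
have s0 : 0 <= s by apply: sqrtr_ge0.
have s2 : s ^+ 2 = mu ^+ 2 + 4 by rewrite sqr_sqrtr //; nra.
have l0 : 0 < l by rewrite /l /lamPplus -/s; nra.
have ln : l != 0 by rewrite gt_eqF.
have eq : l ^+ 2 - mu * l - 1 = 0.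
  rewrite /l /lamPplus -/s.
  have -> : ((s + mu) / 2) ^+ 2 - mu * ((s + mu) / 2) - 1 = (s ^+ 2 - mu ^+ 2 - 4) / 4 by field.
  by rewrite s2 [mu ^+ 2 + 4]addrC addrK subrr mul0r.
have lmu : mu = (l ^+ 2 - 1) / l.
  apply: (mulIf ln); rewrite divfK //.
  apply/eqP; rewrite -subr_eq0 -oppr_eq0; apply/eqP; rewrite -eq; ring.
have k0 : 1 + l ^+ 2 != 0 by rewrite gt_eqF //; nra.
rewrite /a /b; clearbody l s; subst mu.
have k1 : 0 < 1 + l ^+ 2 by nra.
split.
  by field.
  by field; rewrite k0 ln.
  by rewrite pmulr_rgt0 ?invr_gt0 //; nra.
by field; rewrite k0 ln.
Qed.

Lemma addmxE' (R : rcfType) m p (A B : 'M[R]_(m, p)) i j : (A + B) i j = A i j + B i j.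
Proof. by rewrite mxE. Qed.

Unset Implicit Arguments.

Theorem proposition6 (R : rcfType) (n : nat) (e : rel 'I_n)
  (Phi : 'M[R]_n) (mu : 'I_n -> R) (S : 'M[R]_(n + n)) :
  simple_graph e -> graph_connected e ->
  Phi^T *m Phi = 1%:M ->
  (forall i : 'I_n, laplacian R e *m col i Phi = mu i *: col i Phi) ->
  is_pd_sqrt ((Gmx (laplacian R e))^T *m Gmx (laplacian R e)) S ->
  let calA := \sum_(i < n)
      ((1 - lamPplus (mu i) ^+ 2) / (1 + lamPplus (mu i) ^+ 2))
        *: (col i Phi *m (col i Phi)^T) in
  let calB := \sum_(i < n)
      ((2 * lamPplus (mu i)) / (1 + lamPplus (mu i) ^+ 2))
        *: (col i Phi *m (col i Phi)^T) in
  Gmx (laplacian R e) *m invmx S = block_mx calA calB (- calB) calA.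
Proof.
move=> _ _ orth hL [[ST Spd] SS] calA calB.
set L := laplacian R e.
have LF : L = F Phi mu.
  have LP : L *m Phi = Phi *m Dm mu.
    apply/matrixP=> a i; transitivity ((L *m col i Phi) a 0).
      by rewrite !mxE; apply: eq_bigr => k _; rewrite !mxE.
    by rewrite hL mul_mx_diag !mxE mulrC.
  by rewrite /F -LP -mulmxA (orth2 orth) mulmx1.
pose a := fun i => (1 - lamPplus (mu i) ^+ 2) / (1 + lamPplus (mu i) ^+ 2).
pose b := fun i => (2 * lamPplus (mu i)) / (1 + lamPplus (mu i) ^+ 2).
have sc : forall i, [/\ a i ^+ 2 + b i ^+ 2 = 1, a i + b i * mu i = - a i, 0 < b i
    & b i * (b i - a i * mu i) - a i ^+ 2 = 1] by move=> i; exact: scal.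
have -> : calA = F Phi a by rewrite /calA F_outer.
have -> : calB = F Phi b by rewrite /calB F_outer.
set U := block_mx (F Phi a) (F Phi b) (- F Phi b) (F Phi a).
have UT : U^T = block_mx (F Phi a) (F Phi (fun i => - b i)) (F Phi b) (F Phi a).
  by rewrite /U tr_block_mx !FT linearN /= FT FN.
have UUt : U *m U^T = 1%:M.
  rewrite UT /U mulmx_block !mulNmx !(FM orth) !FN !FD.
  rewrite (scalar_mx_block n n 1) -(F1 orth) -(F0 Phi).
  congr block_mx; apply: F_ext => i; have [h1 _ _ _] := sc i; first [ring | rewrite -h1; ring].
have UtU : U^T *m U = 1%:M by apply: mulmx1C.
set G := Gmx L.
set P := U^T *m G.
have PE : P = block_mx (F Phi b) (F Phi (fun i => - a i)) (F Phi (fun i => - a i))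
                       (F Phi (fun i => b i - a i * mu i)).
  rewrite /P UT /G /Gmx LF mulmx_block !mulmx0 !mulmx1 !mulmxN !add0r !(FM orth) !FN !FD !mulmx1 !FN.
  by congr block_mx; apply: F_ext => i; have [_ h2 _ _] := sc i; rewrite ?mulNr ?opprK ?h2.
have PT : P^T = P by rewrite PE tr_block_mx !FT.
have Ppsd : forall v : 'cV[R]_(n + n), 0 <= (v^T *m P *m v) 0 0.
  move=> v; rewrite PE -(vsubmxK v) tr_col_mx mul_row_block mul_row_col !mulmxDl !addmxE' !F_quad.
  rewrite -!big_split /=; apply: sumr_ge0 => i _.
  have [_ _ h3 h4] := sc i.
  set x := (Phi^T *m usubmx v) i 0; set y := (Phi^T *m dsubmx v) i 0.
  set c := b i - a i * mu i in h4 *.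
  rewrite -(pmulr_rge0 _ h3).
  have -> : b i * (x * b i * x + y * - a i * x + (x * - a i * y + y * c * y))
      = (b i * x - a i * y) ^+ 2 + (b i * c - a i ^+ 2) * y ^+ 2 by ring.
  by rewrite h4 mul1r addr_ge0 // sqr_ge0.
have SP : S = P.
  apply: sqrt_uniq => //.
  by rewrite SS -{1}PT trmx_mul trmxK -mulmxA (mulmxA U) UUt mul1mx.
have GH : G *m block_mx (- L) (- 1%:M) 1%:M 0 = 1%:M.
  rewrite /G /Gmx mulmx_block !mul0mx !mulmx0 !mul1mx !mulmx1 !mulNmx !mulmxN !opprK.
  by rewrite !mul1mx !add0r addr0 subrr (scalar_mx_block n n 1).
have Su : S \in unitmx.
  apply: (proj1 (mulmx1_unit (B := block_mx (- L) (- 1%:M) 1%:M 0 *m U) _)).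
  by rewrite SP /P -!mulmxA (mulmxA G) GH mul1mx UtU.
have GUS : G = U *m S by rewrite SP /P mulmxA UUt mul1mx.
by rewrite GUS mulmxK.
Qed.
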